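(* For every Markov chain with positive equilibrium $P^*$ and every probability distribution $P^0$, the velocity vector $\frac{dP}{dt}\big|_{P=P^0}$ given by its Kolmogorov equation is a linear combination with non-negative coefficients of the vectors $\frac{dP}{dt}\big|_{P=P^0}$ of the two-state reversible chains $A_i\rightleftharpoons A_j$ ($i\ne j$) with equilibrium $P^*$, i.e. of the vectors $\bigl(\frac{p^0_j}{p^*_j}-\frac{p^0_i}{p^*_i}\bigr)\gamma^{ji}$, $1\le j<i\le n$. (The coefficients may depend on $P^0$.) Consequently, for every $P^0$ the set of all vectors $\frac{dP}{dt}\big|_{P=P^0}$ over all Markov chains with equilibrium $P^*$ equals the set of such vectors over all chains with detailed balance and equilibrium $P^*$, namely the cone $\mathbf{Q}(P^0,P^* )$.
   Context: Fix $n\ge 2$ and $P^*=(p^*_i)$ with $p^*_i>0$, $\sum_i p^*_i=1$. A Markov chain is given by rate constants $q_{ij}\ge 0$ ($i\ne j$) with Kolmogorov equation $\frac{dp_i}{dt}=\sum_{j\ne i}(q_{ij}p_j-q_{ji}p_i)$; it has equilibrium $P^*$ if $\sum_{j\ne i}q_{ij}p^*_j=\bigl(\sum_{j\ne i}q_{ji}\bigr)p^*_i$ for all $i$. The two-state chain $A_i\rightleftharpoons A_j$ with equilibrium $P^*$ has only nonzero rates $q_{ji}=1/p^*_i$, $q_{ij}=1/p^*_j$. It has detailed balance if $q_{ij}p^*_j=q_{ji}p^*_i$ for all $i\ne j$. For $i\neq j$, $\gamma^{ji}$ is the vector with $\gamma^{ji}_j=-1$, $\gamma^{ji}_i=1$,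 other coordinates $0$; ${\rm cone}$ denotes non-negative linear combinations; ${\rm sign}$ is the three-valued sign function; $\mathbf{Q}(P,P^* )={\rm cone}\{\gamma^{ji}\,{\rm sign}(\tfrac{p_j}{p^*_j}-\tfrac{p_i}{p^*_i}) : 1\le j<i\le n\}$. *)

(* Defs.v *)
From HB Require Import structures.
From mathcomp Require Import all_boot all_order all_algebra.
Set Implicit Arguments. Unset Strict Implicit. Unset Printing Implicit Defensive.
Import Order.TTheory GRing.Theory Num.Theory.
Local Open Scope ring_scope.

Section Defs.
Variables (R : realFieldType) (n : nat).

(* Vectors P = (p_1..p_n) are row vectors 'rV[R]_n; p_i is [p ord0 i].
   Rate constants q_{ij} (i <> j) are the entries [q i j] of an n x n matrix;
   the diagonal is ignored. *)

Definition is_rates (q : 'M[R]_n) : Prop :=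
  forall i j : 'I_n, i != j -> 0 <= q i j.

Definition kolm (q : 'M[R]_n) (p : 'rV[R]_n) : 'rV[R]_n :=
  \row_i \sum_(j < n | j != i) (q i j * p ord0 j - q j i * p ord0 i).

Definition has_equil (q : 'M[R]_n) (ps : 'rV[R]_n) : Prop :=
  forall i : 'I_n,
    \sum_(j < n | j != i) q i j * ps ord0 j = (\sum_(j < n | j != i) q j i) * ps ord0 i.

Definition detailed_balance (q : 'M[R]_n) (ps : 'rV[R]_n) : Prop :=
  forall i j : 'I_n, i != j -> q i j * ps ord0 j = q j i * ps ord0 i.

Definition two_state (ps : 'rV[R]_n) (i j : 'I_n) : 'M[R]_n :=
  \matrix_(a < n, b < n)
    if (a == j) && (b == i) then (ps ord0 i)^-1
    else if (a == i) && (b == j) then (ps ord0 j)^-1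
    else 0.

Definition gamma (j i : 'I_n) : 'rV[R]_n :=
  \row_k ((k == i)%:R - (k == j)%:R).

Definition is_distr (p : 'rV[R]_n) : Prop :=
  (forall i, 0 <= p ord0 i) /\ \sum_(i < n) p ord0 i = 1.

Definition pos_distr (p : 'rV[R]_n) : Prop :=
  (forall i, 0 < p ord0 i) /\ \sum_(i < n) p ord0 i = 1.

Definition in_Qcone (p ps : 'rV[R]_n) (v : 'rV[R]_n) : Prop :=
  exists c : 'M[R]_n, (forall a b, 0 <= c a b) /\
    v = \sum_(i < n) \sum_(j < n | (j < i)%N)
          c j i *: (Num.sg (p ord0 j / ps ord0 j - p ord0 i / ps ord0 i) *: gamma j i).

End Defs.
Arguments gamma {R n}.

(* Main.v *)
Require Import Defs.
From HB Require Import structures.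
From mathcomp Require Import all_boot all_order all_algebra.
From mathcomp Require Import ring lra.
Import Order.TTheory GRing.Theory Num.Theory.
Local Open Scope ring_scope.

Section S.
Variable (R : realFieldType) (n : nat) (x : 'I_n -> R).

Lemma exmax (S : {set 'I_n}) i0 : i0 \in S -> exists2 m, m \in S & forall k, k \in S -> x k <= x m.
Proof.
move=> Hi. case: (@arg_maxP _ _ _ i0 (mem S) x Hi) => m Hm H. by exists m.
Qed.

Lemma split_m (S : {set 'I_n}) m (c : pred 'I_n) (F : 'I_n -> R) : m \in S ->
  \sum_(k in S | c k) F k = (if c m then F m else 0) + \sum_(k in S :\ m | c k) F k.
Proof.
move=> Hm.
rewrite big_mkcondr /= (bigD1 m) //=; congr (_ + _).
rewrite [RHS]big_mkcondr /=; apply: eq_bigl => k; by rewrite !inE andbC.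
Qed.

Lemma Dlem (S : {set 'I_n}) : exists l : 'I_n -> R, (forall k, 0 <= l k) /\
  forall a b, a \in S -> b \in S -> x a <= x b ->
  \sum_(k in S | (x a < x k) && (x k <= x b)) l k = x b - x a.
Proof.
have [N] := ubnP #|S|; elim: N S => // N IH S HS.
have emp0 : forall l a b, x a = x b ->
   \sum_(k in S | (x a < x k) && (x k <= x b)) l k = x b - x a.
  move=> l a b Eab; rewrite Eab subrr big1 // => k /andP[_ /andP[h1 h2]].
  by move: (lt_le_trans h1 h2); rewrite ltxx.
case: (set_0Vmem S) => [->|[m0 Hm0]].
  by exists (fun=> 0); split=> // a b; rewrite in_set0.
have [m Hm Hmax] := @exmax S m0 Hm0.
have HS' : (#|S :\ m| < N)%N by move: HS; rewrite (cardsD1 m S) Hm add1n ltnS.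
have [l' [Hl'0 Hl']] := IH _ HS'.
case: (set_0Vmem (S :\ m)) => [HS0 | [m1 Hm1]].
  exists l'; split => // a b Ha Hb Hab; apply: emp0.
  have Ea : a = m.
    apply/eqP; apply: contraT => H; have: a \in S :\ m by rewrite !inE H Ha.
    by rewrite HS0 inE.
  have Eb : b = m.
    apply/eqP; apply: contraT => H; have: b \in S :\ m by rewrite !inE H Hb.
    by rewrite HS0 inE.
  by rewrite Ea Eb.
have [m2 Hm2 Hmax2] := @exmax (S :\ m) m1 Hm1.
have Hm2S : m2 \in S by move: Hm2; rewrite !inE => /andP[].
have Hm2m : x m2 <= x m := Hmax _ Hm2S.
exists (fun k => if k == m then x m - x m2 else l' k); split.
  by move=> k; case: eqP => _ //; rewrite subr_ge0.
move=> a b Ha Hb Hab.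
case: (eqVneq (x a) (x b)) => [Eab|Nab]; first exact: emp0.
have Ltab : x a < x b by rewrite lt_neqAle Nab Hab.
have HaS' : a \in S :\ m.
  rewrite !inE Ha andbT; apply/eqP => Eam; move: Ltab; rewrite Eam.
  by rewrite ltNge Hmax.
rewrite (@split_m S m _ _ Hm) eqxx.
have -> : \sum_(k in S :\ m | (x a < x k) && (x k <= x b))
             (if k == m then x m - x m2 else l' k)
        = \sum_(k in S :\ m | (x a < x k) && (x k <= x b)) l' k.
  apply: eq_bigr => k; rewrite !inE => /andP[/andP[/negPf -> _] _] //.
case: (eqVneq b m) => [Ebm|Nbm].
  rewrite Ebm in Ltab *; rewrite Ltab lexx /=.
  have -> : \sum_(k in S :\ m | (x a < x k) && (x k <= x m)) l' k
          = \sum_(k in S :\ m | (x a < x k) && (x k <= x m2)) l' k.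
    apply: eq_bigl => k; case: (boolP (k \in S :\ m)) => //= Hk.
    have HkS : k \in S by move: Hk; rewrite !inE => /andP[].
    by rewrite Hmax // Hmax2.
  rewrite Hl' //; last exact: Hmax2.
  by rewrite addrA subrK.
have HbS' : b \in S :\ m by rewrite !inE Nbm Hb.
rewrite Hl' // ; case: ifP => [/andP[_ Hmb]|_]; last by rewrite add0r.
have : x m2 = x m.
  apply/eqP; rewrite eq_le Hm2m /=; exact: (le_trans Hmb (Hmax2 _ HbS')).
by move=> ->; rewrite subrr add0r.
Qed.

Definition J a b k : R := ((x a < x k) && (x k <= x b))%:R.

Lemma Jdec a b k : J a b k = (x a < x k)%R%:R - (x a < x k)%R%:R * (x b < x k)%R%:R.
Proof. by rewrite /J leNgt; case: (x a < x k); case: (x b < x k); rewrite /= ?mulr1 ?mulr0 ?subr0 ?subrr. Qed.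

Lemma J_ge0 a b k : 0 <= J a b k.
Proof. by rewrite /J ler0n. Qed.

Lemma ML (W : 'I_n -> 'I_n -> R) : (forall i j, 0 <= W i j) ->
  (forall i, \sum_j W i j = \sum_j W j i) ->
  exists C : 'I_n -> 'I_n -> R, (forall a b, 0 <= C a b) /\
    (forall a b, x b <= x a -> C a b = 0) /\
    forall i, \sum_j W i j * (x j - x i) = \sum_b C i b - \sum_a C a i.
Proof.
move=> W0 Wbal.
have [l [l0 Hl]] := Dlem [set: 'I_n].
have thr : forall i j, x j - x i = \sum_k l k * (J i j k - J j i k).
  move=> i j.
  have E : forall a b, \sum_k l k * J a b k = \sum_(k in [set: 'I_n] | (x a < x k) && (x k <= x b)) l k.
    move=> a b; rewrite [RHS]big_mkcond /=; apply: eq_bigr => k _.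
    by rewrite in_setT /J /=; case: (_ && _); rewrite ?mulr1 ?mulr0.
  have Z : forall a b, x a <= x b -> \sum_k l k * J b a k = 0.
    move=> a b hab; apply: big1 => k _; rewrite /J.
    case: andP => [[h1 h2]|_]; last by rewrite mulr0.
    by move: (lt_le_trans h1 (le_trans h2 hab)); rewrite ltxx.
  under eq_bigr do rewrite mulrBr.
  rewrite sumrB !E.
  case: (leP (x i) (x j)) => h.
    by rewrite Hl ?in_setT // -E Z // subr0.
  rewrite (Hl j i) ?in_setT ?(ltW h) // -E Z ?(ltW h) // sub0r opprB //.
pose g k i := \sum_j W i j * (J i j k - J j i k).
pose T k := \sum_(c | x c < x k) g k c.
pose TC k a b := J a b k * (g k a * - g k b / T k).
have gpos : forall k i, x i < x k -> 0 <= g k i.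
  move=> k i h; apply: sumr_ge0 => j _; apply: mulr_ge0 => //.
  by rewrite /J [x k <= x i]leNgt h andbF subr0 ler0n.
have gneg : forall k i, x k <= x i -> g k i <= 0.
  move=> k i h; rewrite -oppr_ge0 -sumrN; apply: sumr_ge0 => j _.
  rewrite -mulrN; apply: mulr_ge0 => //.
  by rewrite /J [x i < x k]ltNge h /= sub0r opprK ler0n.
have gsum : forall k, \sum_i g k i = 0.
  move=> k; pose L i : R := (x i < x k)%R%:R.
  have -> : \sum_i g k i = \sum_i \sum_j (W i j * L i - W i j * L j).
    apply: eq_bigr => i _; apply: eq_bigr => j _.
    rewrite !Jdec -/(L i) -/(L j) -mulrBr; congr (_ * _); rewrite [L j * L i]mulrC; ring.
  rewrite (eq_bigr (fun i => \sum_j W i j * L i - \sum_j W i j * L j)); last by move=> i _; rewrite sumrB.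
  rewrite sumrB; apply/eqP; rewrite subr_eq0; apply/eqP.
  transitivity (\sum_i \sum_j W j i * L i); last by rewrite exchange_big.
  by apply: eq_bigr => i _; rewrite -mulr_suml Wbal mulr_suml.
have Tge0 : forall k, 0 <= T k by move=> k; apply: sumr_ge0 => c; apply: gpos.
have sumneg : forall k, \sum_(c | x k <= x c) - g k c = T k.
  move=> k; have := gsum k; rewrite (bigID (fun c => x c < x k)) /= => /eqP.
  rewrite addrC addr_eq0 => /eqP H; rewrite sumrN.
  rewrite (eq_bigl (fun c => ~~ (x c < x k))); last by move=> c; rewrite leNgt.
  by rewrite H opprK.
have TL : forall k i, g k i = \sum_b TC k i b - \sum_a TC k a i.
  move=> k i; rewrite /TC.
  case: (ltP (x i) (x k)) => h.
    rewrite [X in _ - X]big1 ?subr0; last first.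
      by move=> a _; rewrite /J [x k <= x i]leNgt h andbF mul0r.
    have -> : \sum_b J i b k * (g k i * - g k b / T k) = g k i / T k * \sum_(b | x k <= x b) - g k b.
      rewrite [RHS]mulr_sumr [RHS]big_mkcond /=; apply: eq_bigr => b _.
      rewrite /J h /=; case: (x k <= x b); rewrite ?mul1r ?mul0r //.
      by rewrite mulrAC.
    rewrite sumneg; case: (eqVneq (T k) 0) => [T0|Tn0]; last by rewrite divfK.
    rewrite T0 mulr0; apply/eqP; rewrite eq_le gpos // andbT -T0 /T.
    by rewrite (bigD1 i) //= lerDl; apply: sumr_ge0 => c /andP[hc _]; apply: gpos.
  rewrite [X in X - _]big1 ?sub0r; last first.
    by move=> a _; rewrite /J ltNge h /= mul0r.
  have -> : \sum_a J a i k * (g k a * - g k i / T k) = - g k i / T k * \sum_(a | x a < x k) g k a.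
    rewrite [RHS]mulr_sumr [RHS]big_mkcond /=; apply: eq_bigr => a _.
    rewrite /J h andbT; case: (x a < x k); rewrite ?mul1r ?mul0r //.
    by ring.
  rewrite -/(T k); case: (eqVneq (T k) 0) => [T0|Tn0]; last by rewrite (divfK Tn0) opprK.
  rewrite T0 mulr0 oppr0; apply/eqP; rewrite eq_le gneg //= -oppr_le0 -T0 -sumneg.
  by rewrite (bigD1 i) //= lerDl; apply: sumr_ge0 => c /andP[hc _]; rewrite oppr_ge0; apply: gneg.
exists (fun a b => \sum_k l k * TC k a b); split; last split.
- move=> a b; apply: sumr_ge0 => k _; apply: mulr_ge0 => //.
  rewrite /TC /J; case: andP => [[h1 h2]|_]; last by rewrite mul0r.
  rewrite mul1r; apply: divr_ge0 => //; apply: mulr_ge0; first exact: gpos.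
  by rewrite oppr_ge0; apply: gneg.
- move=> a b hab; apply: big1 => k _; rewrite /TC /J.
  case: andP => [[h1 h2]|_]; last by rewrite mul0r mulr0.
  by move: (lt_le_trans h1 (le_trans h2 hab)); rewrite ltxx.
- move=> i.
  have -> : \sum_j W i j * (x j - x i) = \sum_k l k * g k i.
    rewrite (eq_bigr (fun j => \sum_k W i j * (l k * (J i j k - J j i k)))); last first.
      by move=> j _; rewrite thr mulr_sumr.
    rewrite exchange_big /=; apply: eq_bigr => k _; rewrite mulr_sumr; apply: eq_bigr => j _.
    by rewrite mulrCA.
  rewrite (eq_bigr (fun k => \sum_b l k * TC k i b - \sum_a l k * TC k a i)); last first.
    by move=> k _; rewrite TL mulrBr !mulr_sumr.
  by rewrite sumrB; congr (_ - _); rewrite exchange_big.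
Qed.

End S.

Section T.
Variable (R : realFieldType) (n : nat).

Definition Vr (F : 'I_n -> 'I_n -> R) : 'rV[R]_n :=
  \row_k (\sum_b F k b - \sum_a F a k).

Lemma split3 (k : 'I_n) (X : 'I_n -> R) : X k = 0 ->
  \sum_b X b = \sum_(b : 'I_n | (b < k)%N) X b + \sum_(b : 'I_n | (k < b)%N) X b.
Proof.
move=> Xk; rewrite (bigID (fun b : 'I_n => (b < k)%N)) /=; congr (_ + _).
rewrite (bigD1 k) /= ?ltnn // Xk add0r; apply: eq_bigl => b.
rewrite -leqNgt ltn_neqAle andbC; congr (_ && _).
by rewrite eq_sym -(inj_eq val_inj).
Qed.

Lemma gamma_sum (F : 'I_n -> 'I_n -> R) :
  Vr F = \sum_(i < n) \sum_(j < n | (j < i)%N) (F i j - F j i) *: gamma j i.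
Proof.
apply/rowP => k; rewrite !mxE summxE.
rewrite [RHS](eq_bigr (fun i : 'I_n => \sum_(j < n | (j < i)%N) ((F i j - F j i) *: gamma j i) 0 k)); last first.
  by move=> i _; rewrite summxE.
pose D i j := F i j - F j i.
have -> : \sum_(i < n) \sum_(j < n | (j < i)%N) ((F i j - F j i) *: gamma j i) 0 k
   = \sum_(i < n) \sum_(j < n | (j < i)%N) D i j * (k == i)%:R
     - \sum_(i < n) \sum_(j < n | (j < i)%N) D i j * (k == j)%:R.
  rewrite -sumrB; apply: eq_bigr => i _; rewrite -sumrB; apply: eq_bigr => j _.
  by rewrite !mxE mulrBr.
have -> : \sum_(i < n) \sum_(j < n | (j < i)%N) D i j * (k == i)%:R
          = \sum_(j : 'I_n | (j < k)%N) D k j.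
  rewrite (bigD1 k) //= [X in _ + X]big1 ?addr0.
    by apply: eq_bigr => j _; rewrite eqxx mulr1.
  move=> i ik; apply: big1 => j _; by rewrite eq_sym (negPf ik) mulr0.
have -> : \sum_(i < n) \sum_(j < n | (j < i)%N) D i j * (k == j)%:R
          = \sum_(i : 'I_n | (k < i)%N) D i k.
  rewrite [RHS]big_mkcond; apply: eq_bigr => i _.
  rewrite big_mkcond (bigD1 k) //= eqxx mulr1 big1 ?addr0 //.
  by move=> j jk; rewrite eq_sym (negPf jk) mulr0; case: ifP.
rewrite -sumrB (@split3 k (D k)) ?/D ?subrr //.
rewrite -sumrN; congr (_ + _); apply: eq_bigr => i _; by rewrite opprB.
Qed.

Lemma kolm_V (q : 'M[R]_n) (p : 'rV[R]_n) :
  kolm q p = Vr (fun a b => (a != b)%:R * (q a b * p ord0 b)).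
Proof.
apply/rowP => k; rewrite !mxE sumrB; congr (_ - _); rewrite big_mkcond /=;
  apply: eq_bigr => j _; rewrite ?(eq_sym j k); case: (k != j) => /=;
  by rewrite ?mul1r ?mul0r.
Qed.

Lemma kolm_gamma (q : 'M[R]_n) (p : 'rV[R]_n) :
  kolm q p = \sum_(i < n) \sum_(j < n | (j < i)%N)
     (q i j * p ord0 j - q j i * p ord0 i) *: gamma j i.
Proof.
rewrite kolm_V gamma_sum; apply: eq_bigr => i _; apply: eq_bigr => j ji.
have ij : i != j by rewrite neq_ltn ji orbT.
by rewrite ij eq_sym ij !mul1r.
Qed.

End T.

Section U.
Variable (R : realFieldType) (n : nat) (ps p0 : 'rV[R]_n).
Hypothesis hps : forall i, 0 < ps ord0 i.

Let x i := p0 ord0 i / ps ord0 i.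

Lemma psn0 i : ps ord0 i != 0.
Proof. by rewrite gt_eqF. Qed.

Lemma p_eq i : p0 ord0 i = ps ord0 i * x i.
Proof. by rewrite /x mulrC divfK // psn0. Qed.

Lemma key1 (C : 'I_n -> 'I_n -> R) : (forall a b, x b <= x a -> C a b = 0) ->
  forall i j, (C i j + C j i) / `|x j - x i| * (x j - x i) = C i j - C j i.
Proof.
move=> HC i j; case: (ltgtP (x i) (x j)) => h.
- have d0 : x j - x i != 0 by rewrite subr_eq0 gt_eqF.
  by rewrite (HC j i (ltW h)) addr0 subr0 ger0_norm ?subr_ge0 ?(ltW h) // (divfK d0).
- have d0 : x j - x i != 0 by rewrite subr_eq0 lt_eqF.
  rewrite (HC i j (ltW h)) add0r sub0r ltr0_norm ?subr_lt0 //.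
  by rewrite invrN mulrN mulNr (divfK d0).
- have e1 : x j <= x i by rewrite h.
  have e2 : x i <= x j by rewrite h.
  by rewrite (HC i j e1) (HC j i e2) addr0 subr0 !mul0r.
Qed.

Lemma kolm_two (i j : 'I_n) : j != i ->
  kolm (two_state ps i j) p0 = (x j - x i) *: gamma j i.
Proof.
move=> ji; apply/rowP => k; rewrite !mxE.
have E : forall l, two_state ps i j k l * p0 ord0 l - two_state ps i j l k * p0 ord0 k
   = ((k == i) && (l == j))%:R * (x j - x i) + ((k == j) && (l == i))%:R * (x i - x j).
  have ij : i != j by rewrite eq_sym.
  move=> l; rewrite /two_state !mxE /x.
  case: (eqVneq k i) => [->|ki]; case: (eqVneq l j) => [->|lj];
    rewrite ?eqxx ?(negPf ij) ?(negPf ji) ?(negPf ki) ?(negPf lj) ?andbF ?andbT /=; try ring.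
  case: (eqVneq k j) => [->|kj]; case: (eqVneq l i) => [->|li];
    rewrite ?eqxx ?(negPf ij) ?(negPf ji) ?(negPf kj) ?(negPf li) ?andbF ?andbT /=; try ring.
under eq_bigr => l _ do rewrite E.
rewrite big_split /=.
have ij : i != j by rewrite eq_sym.
case: (eqVneq k i) => [->|ki].
  rewrite [X in _ + X]big1 ?addr0; last by move=> l _; rewrite (negPf ij) mul0r.
  rewrite (bigD1 j) //= !eqxx [X in _ + X]big1 ?addr0; last first.
    by move=> l /andP[_ /negPf ->]; rewrite mul0r.
  by rewrite (negPf ij) mul1r subr0 mulr1.
case: (eqVneq k j) => [->|kj].
  rewrite [X in X + _]big1 ?add0r; last by move=> l _; rewrite ?(negPf ki) ?(negPf ji) mul0r.
  rewrite (bigD1 i) //= !eqxx [X in _ + X]big1 ?addr0; last first.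
    by move=> l /andP[_ /negPf ->]; rewrite mul0r.
  by rewrite mul1r mulrN1 opprB.
by rewrite subrr mulr0 !big1 ?addr0 // => l _; rewrite mul0r.
Qed.

Lemma cone_kolm (q : 'M[R]_n) : is_rates q -> has_equil q ps ->
  exists C : 'I_n -> 'I_n -> R, (forall a b, 0 <= C a b) /\
    (forall a b, x b <= x a -> C a b = 0) /\
    kolm q p0 = \sum_(i < n) \sum_(j < n | (j < i)%N) (C i j - C j i) *: gamma j i.
Proof.
move=> Hr He.
pose W i j := (j != i)%:R * (q i j * ps ord0 j).
have W0 : forall i j, 0 <= W i j.
  move=> i j; rewrite /W; case: (eqVneq j i) => [->|h]; rewrite /= ?mul0r ?mul1r //.
  by apply: mulr_ge0; [apply: Hr; rewrite eq_sym | apply: ltW].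
have Wbal : forall i, \sum_j W i j = \sum_j W j i.
  move=> i.
  have -> : \sum_j W i j = \sum_(j | j != i) q i j * ps ord0 j.
    rewrite [RHS]big_mkcond; apply: eq_bigr => j _; rewrite /W.
    by case: (j != i); rewrite ?mul1r ?mul0r.
  have -> : \sum_j W j i = (\sum_(j | j != i) q j i) * ps ord0 i.
    rewrite mulr_suml [RHS]big_mkcond; apply: eq_bigr => j _; rewrite /W eq_sym.
    by case: (j != i); rewrite ?mul1r ?mul0r.
  exact: He.
have [C [C0 [CZ CE]]] := @ML R n x W W0 Wbal.
exists C; do 2 split => //.
rewrite -gamma_sum; apply/rowP => k; rewrite !mxE -CE.
have -> : \sum_j W k j * (x j - x k)
   = \sum_(j | j != k) (q k j * p0 ord0 j - q k j * ps ord0 j * x k).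
  rewrite [RHS]big_mkcond; apply: eq_bigr => j _; rewrite /W.
  case: (j != k); rewrite ?mul1r ?mul0r //= p_eq; ring.
rewrite !sumrB; congr (_ - _).
by rewrite -!mulr_suml He p_eq mulrA.
Qed.

Lemma qs_props (s : 'I_n -> 'I_n -> R) : (forall a b, 0 <= s a b) ->
  (forall a b, s a b = s b a) ->
  let q := \matrix_(a < n, b < n) (s a b / ps ord0 b) in
  is_rates q /\ has_equil q ps /\ detailed_balance q ps /\
  kolm q p0 = \sum_(i < n) \sum_(j < n | (j < i)%N) (s i j * (x j - x i)) *: gamma j i.
Proof.
move=> s0 ssym q.
have qE : forall a b, q a b * ps ord0 b = s a b.
  by move=> a b; rewrite /q mxE divfK // psn0.
split; [|split; [|split]].
- move=> a b _; rewrite /q mxE; apply: divr_ge0 => //; exact: ltW.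
- move=> i; rewrite (eq_bigr (fun j => s i j)); last by move=> j _; rewrite qE.
  rewrite mulr_suml; apply: eq_bigr => j _; by rewrite qE ssym.
- by move=> i j _; rewrite !qE ssym.
- rewrite kolm_gamma; apply: eq_bigr => i _; apply: eq_bigr => j _; congr (_ *: _).
  rewrite /q !mxE (ssym j i) /x; ring.
Qed.

Lemma db_coef (q : 'M[R]_n) : detailed_balance q ps -> forall i j : 'I_n, i != j ->
  q i j * p0 ord0 j - q j i * p0 ord0 i
    = q i j * ps ord0 j * `|x j - x i| * Num.sg (x j - x i).
Proof.
move=> Hd i j ij.
rewrite (p_eq j) (p_eq i) [q j i * _]mulrA -(Hd i j ij).
rewrite -[RHS]mulrA [`|_| * _]mulrC -numEsg; ring.
Qed.

Lemma cone_coef (c : R) (i j : 'I_n) :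
  c / `|x i - x j| * (x j - x i) = c * Num.sg (x j - x i).
Proof.
rewrite distrC; case: (eqVneq (x j - x i) 0) => [->|d0]; first by rewrite sgr0 !mulr0.
rewrite {2}(numEsg (x j - x i)); field.
by rewrite normr_eq0.
Qed.

End U.

Theorem mainTheorem9 (R : realFieldType) (n : nat) (hn : (1 < n)%N)
    (ps : 'rV[R]_n) (hps : pos_distr ps) :
  (forall (q : 'M[R]_n) (p0 : 'rV[R]_n),
      is_rates q -> has_equil q ps -> is_distr p0 ->
      exists c : 'M[R]_n, (forall a b, 0 <= c a b) /\
        kolm q p0 = \sum_(i < n) \sum_(j < n | (j < i)%N)
                       c j i *: kolm (two_state ps i j) p0 /\
        kolm q p0 = \sum_(i < n) \sum_(j < n | (j < i)%N)
                       c j i *: ((p0 ord0 j / ps ord0 j - p0 ord0 i / ps ord0 i) *: gamma j i))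
  /\
  (forall p0 : 'rV[R]_n, is_distr p0 -> forall v : 'rV[R]_n,
      ((exists q : 'M[R]_n, is_rates q /\ has_equil q ps /\ v = kolm q p0) <->
       (exists q : 'M[R]_n, is_rates q /\ has_equil q ps /\ detailed_balance q ps /\ v = kolm q p0))
      /\
      ((exists q : 'M[R]_n, is_rates q /\ has_equil q ps /\ detailed_balance q ps /\ v = kolm q p0) <->
       in_Qcone p0 ps v)).
Proof.
case: hps => hpos _.
split.
  move=> q p0 Hr He _.
  have [C [C0 [CZ CE]]] := @cone_kolm R n ps p0 hpos q Hr He.
  pose c := \matrix_(a < n, b < n)
     ((C b a + C a b) / `|p0 ord0 a / ps ord0 a - p0 ord0 b / ps ord0 b|).
  have E2 : kolm q p0 = \sum_(i < n) \sum_(j < n | (j < i)%N)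
        c j i *: ((p0 ord0 j / ps ord0 j - p0 ord0 i / ps ord0 i) *: gamma j i).
    rewrite CE; apply: eq_bigr => i _; apply: eq_bigr => j _.
    by rewrite scalerA mxE (@key1 R n ps p0 C CZ i j).
  exists c; split; first by move=> a b; rewrite mxE; apply: divr_ge0 => //; apply: addr_ge0.
  split => //; rewrite E2; apply: eq_bigr => i _; apply: eq_bigr => j ji.
  by rewrite kolm_two // neq_ltn ji.
move=> p0 _ v; split; split.
- move=> [q [Hr [He ->]]].
  have [C [C0 [CZ CE]]] := @cone_kolm R n ps p0 hpos q Hr He.
  pose s a b := (C a b + C b a) / `|p0 ord0 b / ps ord0 b - p0 ord0 a / ps ord0 a|.
  have s0 : forall a b, 0 <= s a b.
    by move=> a b; apply: divr_ge0 => //; apply: addr_ge0.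
  have ssym : forall a b, s a b = s b a by move=> a b; rewrite /s addrC distrC.
  have [Hr' [He' [Hd' Hk']]] := @qs_props R n ps p0 hpos s s0 ssym.
  eexists; split; first exact: Hr'; split; first exact: He'; split; first exact: Hd'.
  rewrite Hk' CE; apply: eq_bigr => i _; apply: eq_bigr => j _; congr (_ *: _).
  by rewrite /s (@key1 R n ps p0 C CZ i j).
- by move=> [q [Hr [He [_ ->]]]]; exists q.
- move=> [q [Hr [He [Hd ->]]]].
  exists (\matrix_(a < n, b < n)
     (q b a * ps ord0 a * `|p0 ord0 a / ps ord0 a - p0 ord0 b / ps ord0 b|)).
  split.
    move=> a b; rewrite mxE; case: (eqVneq a b) => [->|ab].
      by rewrite subrr normr0 mulr0.
    apply: mulr_ge0 => //; apply: mulr_ge0; [by apply: Hr; rewrite eq_sym | exact: ltW].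
  rewrite kolm_gamma; apply: eq_bigr => i _; apply: eq_bigr => j ji.
  rewrite scalerA mxE; congr (_ *: _).
  have ij : i != j by rewrite neq_ltn ji orbT.
  exact: (@db_coef R n ps p0 hpos q Hd i j ij).
- move=> [c [c0 ->]].
  pose s (a b : 'I_n) := (if (b < a)%N then c b a else c a b) /
     `|p0 ord0 a / ps ord0 a - p0 ord0 b / ps ord0 b|.
  have s0 : forall a b, 0 <= s a b.
    by move=> a b; apply: divr_ge0 => //; case: ifP.
  have ssym : forall a b, s a b = s b a.
    move=> a b; rewrite /s distrC; case: (ltngtP a b) => h //.
    by have -> : a = b by apply: val_inj.
  have [Hr' [He' [Hd' Hk']]] := @qs_props R n ps p0 hpos s s0 ssym.
  eexists; split; first exact: Hr'; split; first exact: He'; split; first exact: Hd'.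
  rewrite Hk'; apply: eq_bigr => i _; apply: eq_bigr => j ji.
  rewrite scalerA; congr (_ *: _).
  by rewrite /s ji (@cone_coef R n ps p0 (c j i) i j).
Qed.
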